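(* Let $\Gamma$ be an imperfect-recall extensive-form game, $i\in\mathcal N$ a player, and $\Gamma'$ a game with the same game tree as $\Gamma$ but potentially different infosets. If $\Gamma'\succeq_i\Gamma$ and player $i$ has perfect recall in $\Gamma'$, then $\Gamma'\succeq_i\mathrm{pr}_i(\Gamma)$. Moreover, player $i$ has perfect recall in $\mathrm{pr}_i(\Gamma)$.
   Context: An extensive-form game consists of a finite rooted tree (node set $\mathcal H$, leaves $\mathcal Z$, actions $A_h$ at nonterminal nodes), a finite set $\mathcal N$ of players plus chance, an assignment of nonterminal nodes to players or chance (with $\mathcal H_i$ the nodes of player $i$), chance distributions, utilities $u_i:\mathcal Z\to\mathbb R_{\ge0}$, and for each $i$ a partition $\mathcal I_i$ of $\mathcal H_i$ into infosets, all nodes of an infoset having the same action set. The game tree consists of $\mathcal H$, actions and chance distributions. For a node $h$ at depth $d$, with root-to-$h$ path $(h_0,\dots,h_{d-1})$ (excluding $h$), $\mathrm{obs}(h)=(i_k,I_k,a_k)_{k=0}^{d-1}$ records the player acting at $h_k$, the infoset of $h_k$ and the action taken; $\mathrm{obs}_i(h)$ is the subsequence with $i_k=i$. Player $i$ has perfect recall if $\mathrm{obs}_i(h)=\mathrm{obs}_i(h')$ for all $I\in\mathcal I_i$ and $h,h'\in I$; a game is imperfect-recall if some player lacks perfect recall. For games $\Gamma,\Gamma'$ with the same game tree and utilities, $\Gamma'\succeq_i\Gamma$ means every infoset of player $i$ in $\Gamma$ is a disjoint union of infosets of player $i$ in $\Gamma'$. $\mathrm{pr}_i(\Gamma)$ is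 the game with the same tree and utilities as $\Gamma$ in which each $I\in\mathcal I_i$ is partitioned into the equivalence classes of $h\sim h'\iff\mathrm{obs}_i(h)=\mathrm{obs}_i(h')$ (obs computed in $\Gamma$), other players' infosets unchanged. *)

(* Defs.v *)
(* Extensive-form games with nodes represented as histories
   (sequences of actions from the root). *)
From HB Require Import structures.
From mathcomp Require Import all_boot all_order all_algebra.
Set Implicit Arguments. Unset Strict Implicit. Unset Printing Implicit Defensive.
Import Order.TTheory GRing.Theory Num.Theory.
Local Open Scope ring_scope.

Section Games.
Variables (P A : finType) (R : numDomainType).

(* Everything in a game except the information partition:
   the game tree (node set as a finite prefix-closed set of histories, actions,
   chance distributions), the assignment of nodes to players
   (Some i = player i, None = chance) and the utilities. *)
Record base := Base {
  nodes : seq (seq A);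
  who : seq A -> option P;
  chance : seq A -> A -> R;
  util : P -> seq A -> R }.

(* A game: base data plus, for every player, a relation describing the
   partition of that player's nodes into infosets (h ~ h' iff same infoset). *)
Record game := Game {
  gbase : base;
  ginfo : P -> rel (seq A) }.

Definition actions (B : base) (h : seq A) : seq A :=
  [seq a <- enum A | rcons h a \in nodes B].

Definition is_leaf (B : base) (h : seq A) : bool :=
  (h \in nodes B) && (actions B h == [::]).

Definition nonterminal (B : base) (h : seq A) : bool :=
  (h \in nodes B) && (actions B h != [::]).

Definition node_of (G : game) (i : P) (h : seq A) : bool :=
  nonterminal (gbase G) h && (who (gbase G) h == Some i).

Definition wf_base (B : base) : Prop :=
  [/\ [::] \in nodes B,
      (forall h a, rcons h a \in nodes B -> h \in nodes B),
      (forall h, nonterminal B h -> who B h = None ->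
          (forall a, a \in actions B h -> 0 <= chance B h a) /\
          \sum_(a <- actions B h) chance B h a = 1)
    & (forall i z, is_leaf B z -> 0 <= util B i z)].

Definition wf_game (G : game) : Prop :=
  wf_base (gbase G) /\
  forall i : P,
    [/\ {in node_of G i, reflexive (ginfo G i)},
        {in node_of G i &, forall h h', ginfo G i h h' -> ginfo G i h' h},
        {in node_of G i & &, forall h h' h'',
            ginfo G i h h' -> ginfo G i h' h'' -> ginfo G i h h''}
      & {in node_of G i &, forall h h', ginfo G i h h' ->
            actions (gbase G) h = actions (gbase G) h'}].

Definition infoset (G : game) (i : P) (h : seq A) : seq (seq A) :=
  [seq h' <- nodes (gbase G) | node_of G i h' && ginfo G i h h'].

Definition is_infoset (G : game) (i : P) (I : seq (seq A)) : Prop :=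
  exists2 h, node_of G i h & I = infoset G i h.

(* infoset component recorded in obs; chance nodes have no infosets,
   we record the singleton node (irrelevant for obs_i). *)
Definition iset_of (G : game) (o : option P) (h : seq A) : seq (seq A) :=
  if o is Some i then infoset G i h else [:: h].

(* obs(h) = (i_k, I_k, a_k)_{k < depth h}, with h_k = take k h (the k-th node
   on the root-to-h path) and a_k = nth k h (the action taken there). *)
Definition obs (G : game) (h : seq A) : seq (option P * seq (seq A) * A) :=
  [seq (who (gbase G) p.1, iset_of G (who (gbase G) p.1) p.1, p.2)
  | p <- zip [seq take k h | k <- iota 0 (size h)] h].

Definition obs_i (G : game) (i : P) (h : seq A) :=
  [seq x <- obs G h | x.1.1 == Some i].

Definition perfect_recall (G : game) (i : P) : Prop :=
  forall I, is_infoset G i I -> {in I &, forall h h', obs_i G i h = obs_i G i h'}.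

Definition imperfect_recall (G : game) : Prop :=
  exists i : P, ~ perfect_recall G i.

(* G' ⪰_i G : same game tree and utilities (same base), and every infoset of
   player i in G is a (disjoint) union of infosets of player i in G'. *)
Definition refines (G' G : game) (i : P) : Prop :=
  gbase G' = gbase G /\
  forall I, is_infoset G i I ->
    exists S : seq (seq (seq A)),
      (forall J, J \in S -> is_infoset G' i J) /\
      (forall h, (h \in I) = has (fun J => h \in J) S).

Definition pr (G : game) (i : P) : game :=
  Game (gbase G)
       (fun j => if j == i then (fun h h' => ginfo G i h h' && (obs_i G i h == obs_i G i h'))
                 else ginfo G j).

End Games.

(* Main.v *)
Require Import Defs.
From mathcomp Require Import all_boot all_order all_algebra.
Set Implicit Arguments. Unset Strict Implicit. Unset Printing Implicit Defensive.

Section Aux.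
Variables (P A : finType) (R : numDomainType).
Implicit Types (G : game P A R).

Lemma obs_rcons G h a :
  obs G (rcons h a) = rcons (obs G h) (who (gbase G) h, iset_of G (who (gbase G) h) h, a).
Proof.
rewrite /obs size_rcons -addn1 iotaD add0n map_cat /= cats1.
have -> : [seq take k (rcons h a) | k <- iota 0 (size h)] = [seq take k h | k <- iota 0 (size h)].
  apply/eq_in_map => k; rewrite mem_iota add0n => /andP[_ lt].
  by rewrite -cats1 takel_cat // ltnW.
idtac.
have -> : take (size h) (rcons h a) = h by rewrite -cats1 take_size_cat.
by rewrite zip_rcons ?map_rcons // size_map size_iota.
Qed.

Lemma obs_i_rcons G i h a :
  obs_i G i (rcons h a) = obs_i G i h ++
    (if who (gbase G) h == Some i then [:: (Some i, infoset G i h, a)] else [::]).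
Proof.
rewrite /obs_i obs_rcons -cats1 filter_cat /=.
by case: eqP => [->|] //=.
Qed.

Definition Fpr G i (L : seq (option P * seq (seq A) * A)) (I : seq (seq A)) :=
  [seq x <- nodes (gbase G) | (x \in I) && (L == obs_i G i x)].

Fixpoint psi G i (r : seq (option P * seq (seq A) * A)) :=
  match r with
  | [::] => [::]
  | x :: r' => (x.1.1, Fpr G i (rev r') x.1.2, x.2) :: psi G i r'
  end.

Definition Phi G i L := rev (psi G i (rev L)).

Lemma Phi_cat1 G i L x : Phi G i (L ++ [:: x]) = rcons (Phi G i L) (x.1.1, Fpr G i L x.1.2, x.2).
Proof. by rewrite /Phi cats1 rev_rcons /= revK rev_cons. Qed.

Lemma obs_i_pr G i h : obs_i (pr G i) i h = Phi G i (obs_i G i h).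
Proof.
elim/last_ind: h => [|h a IH]; first by [].
rewrite !obs_i_rcons IH /=.
case: eqP => [Hw|_]; last by rewrite !cats0.
rewrite Phi_cat1 cats1 /=; congr (rcons _ (_, _, _)).
rewrite /infoset /Fpr /= eqxx; apply: eq_in_filter => x xn.
by rewrite mem_filter xn andbT andbA.
Qed.

Lemma pr_recall G i : perfect_recall (pr G i) i.
Proof.
move=> I [h0 _ ->] h h'.
rewrite /infoset /= eqxx !mem_filter => /andP[/andP[_ /andP[_ /eqP e1]] _]
  /andP[/andP[_ /andP[_ /eqP e2]] _].
by rewrite !obs_i_pr -e1 -e2.
Qed.

Lemma prefix_node (B : base P A R) : wf_base B ->
  forall x s, x ++ s \in nodes B -> x \in nodes B.
Proof.
case=> _ Hp _ _ x s; elim/last_ind: s => [|s b IH]; first by rewrite cats0.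
by rewrite -rcons_cat => /Hp.
Qed.

Definition pre G i h :=
  [seq pa <- zip [seq take k h | k <- iota 0 (size h)] h | who (gbase G) pa.1 == Some i].

Lemma obs_i_pre G i h :
  obs_i G i h = [seq (Some i, infoset G i pa.1, pa.2) | pa <- pre G i h].
Proof.
rewrite /obs_i /obs filter_map /pre /preim /=.
apply/eq_in_map => -[p a]; rewrite mem_filter /= => /andP[/eqP -> _] //.
Qed.

Lemma mem_pre G i h p a : (p, a) \in pre G i h ->
  who (gbase G) p = Some i /\ exists s, h = rcons p a ++ s.
Proof.
rewrite mem_filter /= => /andP[/eqP Hw Hm]; split => //.
case/(nthP (p, a)): Hm => k; rewrite size_zip size_map size_iota minnn => Hk.
rewrite nth_zip ?size_map ?size_iota // (nth_map 0) ?size_iota // nth_iota // add0n.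
case=> <- <-; exists (drop k.+1 h).
by rewrite cat_rcons -(drop_nth a Hk) cat_take_drop.
Qed.

Lemma map_transfer (T U V : eqType) (f : T -> U) (g : T -> V) (s t : seq T) :
  (forall x y, x \in s -> y \in t -> f x = f y -> g x = g y) ->
  map f s = map f t -> map g s = map g t.
Proof.
elim: s t => [|x s IH] [|y t] //= H [e1 e2].
rewrite (H x y) ?mem_head // (IH t) // => u v us vt; apply: H; rewrite inE ?us ?vt orbT //.
Qed.

End Aux.

Theorem proposition1 (P A : finType) (R : numDomainType) (G G' : game P A R) (i : P) :
  wf_game G -> wf_game G' ->
  imperfect_recall G ->
  gbase G' = gbase G ->
  refines G' G i ->
  perfect_recall G' i ->
  refines G' (pr G i) i /\ perfect_recall (pr G i) i.
Proof.
move=> [WB WG] [_ WG'] _ eB [_ Href] PR'.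
split; last exact: pr_recall.
have node_eq : node_of G' i =1 node_of G i by move=> h; rewrite /node_of eB.
case: (WG i) => Grefl Gsym Gtrans _.
case: (WG' i) => G'refl _ G'trans _.
have node_nodes : forall h, node_of G i h -> h \in nodes (gbase G).
  by move=> h /andP[/andP[]].
have isoeq : forall p q, node_of G i p -> node_of G i q ->
    infoset G' i p = infoset G' i q -> infoset G i p = infoset G i q.
  move=> p q np nq e.
  have pin : p \in infoset G' i q.
    rewrite -e /infoset mem_filter eB node_nodes // andbT node_eq np /=.
    by apply: G'refl; move: np; rewrite -node_eq.
  move: pin; rewrite /infoset mem_filter => /andP[/andP[_ g'qp] _].
  have [S [HS HI]] := Href (infoset G i q) (ex_intro2 _ _ q nq erefl).
  have : q \in infoset G i q.
    by rewrite /infoset mem_filter nq Grefl // node_nodes.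
  rewrite HI => /hasP[J JS qJ].
  have [r nr eJ] := HS J JS.
  have pJ : p \in J.
    move: qJ; rewrite eJ /infoset !mem_filter eB => /andP[/andP[nq' g'rq] _].
    rewrite node_nodes // andbT node_eq np /=.
    have np' : node_of G' i p by rewrite node_eq.
    exact: (G'trans r q p nr nq' np' g'rq g'qp).
  have : p \in infoset G i q by rewrite HI; apply/hasP; exists J.
  rewrite /infoset mem_filter => /andP[/andP[_ gqp] _].
  apply: eq_in_filter => x _; apply/andP/andP => -[nx gx]; split => //.
    by apply: (Gtrans q p x) => //.
  by apply: (Gtrans p q x) => //; apply: Gsym.
have obs_tr : forall h h', h \in nodes (gbase G) -> h' \in nodes (gbase G) ->
    obs_i G' i h = obs_i G' i h' -> obs_i G i h = obs_i G i h'.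
  move=> h h' hn hn'.
  rewrite !obs_i_pre.
  have -> : pre G' i h = pre G i h by rewrite /pre eB.
  have -> : pre G' i h' = pre G i h' by rewrite /pre eB.
  apply: map_transfer => -[p a] [q b] /mem_pre [wp [s hs]] /mem_pre [wq [s' hs']] [ei ea].
  have nodeof : forall p a s h, who (gbase G) p = Some i -> h = rcons p a ++ s ->
      h \in nodes (gbase G) -> node_of G i p.
    move=> p0 a0 s0 h0 w0 -> hn0.
    have := prefix_node WB hn0 => pan.
    rewrite /node_of w0 eqxx andbT /nonterminal (prefix_node WB (s := [:: a0])) ?cats1 //=.
    apply/eqP => e0; have : a0 \in actions (gbase G) p0 by rewrite mem_filter pan mem_enum.
    by rewrite e0.
  by rewrite (isoeq p q) ?ea // ?(nodeof p a s h) ?(nodeof q b s' h').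
split; first by rewrite eB.
move=> I [h0 nh0 ->].
have [S0 [HS0 HI0]] := Href (infoset G i h0) (ex_intro2 _ _ h0 nh0 erefl).
set Ipr := infoset (pr G i) i h0.
have subI : forall h, h \in Ipr -> h \in infoset G i h0.
  by move=> h; rewrite /Ipr /infoset /= eqxx !mem_filter andbA => /andP[/andP[->]].
have closed : forall J, J \in S0 -> forall h h', h \in J -> h \in Ipr -> h' \in J -> h' \in Ipr.
  move=> J JS h h' hJ hI h'J.
  have h'G : h' \in infoset G i h0 by rewrite HI0; apply/hasP; exists J.
  have := PR' J (HS0 J JS) h h' hJ h'J => eo.
  move: hI h'G; rewrite /Ipr /infoset /= eqxx !mem_filter.
  move=> /andP[/andP[nh /andP[g1 /eqP o1]] hn] /andP[/andP[nh' g2] hn'].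
  have nh2 : node_of (pr G i) i h' := nh'.
  by rewrite nh2 g2 hn' /= o1 (obs_tr h h' hn hn' eo) eqxx.
exists [seq J <- S0 | has (fun h => h \in Ipr) J]; split.
  by move=> J; rewrite mem_filter => /andP[_ /HS0].
move=> h; apply/idP/hasP.
  move=> hI; have := subI h hI; rewrite HI0 => /hasP[J JS hJ].
  by exists J => //; rewrite mem_filter JS andbT; apply/hasP; exists h.
move=> [J]; rewrite mem_filter => /andP[/hasP[h1 h1J h1I] JS] hJ.
exact: (closed J JS h1 h).
Qed.
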